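(* Every open subset of a UE-space $Y$ is the union of a $\sigma$-boundedly point-finite family of cozero-sets of $Y$.
   Context: ''Space'' means topological $T_0$-space. A zero-set (cozero-set) of $Y$ is $f^{-1}(0)$ (resp. its complement) for continuous $f:Y\to[0,1]$. A U-representation of $V\subseteq Y$ is a sequence $(U_n(V))_{n\in\mathbb{N}}$ with $V=\bigcup_n U_n(V)$, $U_n(V)\subseteq U_{n+1}(V)$, $U_{2n-1}(V)$ a zero-set, $U_{2n}(V)$ a cozero-set. A family $\alpha$ is an almost subbase of $Y$ if U-representations of its members can be chosen so that $\alpha\cup\{Y\setminus U_{2n-1}(V):V\in\alpha,n\in\mathbb{N}\}$ is a subbase of $Y$. A family is boundedly point-finite if there is an integer $n$ such that any $n+2$ of its members have empty intersection; $\sigma$-boundedly point-finite means a countable union of boundedly point-finite families. A UE-space is a space with a $\sigma$-boundedly point-finite almost subbase. *)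

(* Defs.v *)
From HB Require Import structures.
From mathcomp Require Import all_boot all_order all_algebra.
From mathcomp Require Import all_classical all_reals all_analysis.
Set Implicit Arguments. Unset Strict Implicit. Unset Printing Implicit Defensive.
Import Order.TTheory GRing.Theory Num.Theory.
Import numFieldNormedType.Exports.
Local Open Scope classical_set_scope.
Local Open Scope ring_scope.

Section UEDefs.
Variables (R : realType) (Y : topologicalType).

Definition zero_set (A : set Y) : Prop :=
  exists f : Y -> R, [/\ continuous f, (forall y, 0 <= f y <= 1)
                       & A = f @^-1` [set 0]].

Definition cozero_set (A : set Y) : Prop := zero_set (~` A).

(* U-representation of V, indexed from 0: U k stands for U_{k+1}.
   So U_{2n-1} (n >= 1) is U (2m) (m = n-1), a zero-set,
   and U_{2n} is U (2m+1), a cozero-set. *)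
Definition U_representation (V : set Y) (U : nat -> set Y) : Prop :=
  [/\ V = \bigcup_k U k,
      (forall k, U k `<=` U k.+1),
      (forall m, zero_set (U (2 * m)%N))
    & (forall m, cozero_set (U (2 * m).+1))].

Definition subbase (S : set (set Y)) : Prop :=
  (forall A, S A -> open A) /\
  (forall (W : set Y) (x : Y), open W -> W x ->
     exists s : seq (set Y),
       [/\ (forall A, A \in s -> S A),
           (forall A, A \in s -> A x)
         & (fun y => forall A, A \in s -> A y) `<=` W]).

Definition almost_subbase (alpha : set (set Y)) : Prop :=
  exists U : set Y -> nat -> set Y,
    (forall V, alpha V -> U_representation V (U V)) /\
    subbase (alpha `|` [set ~` U V (2 * m)%N | V in alpha & m in [set: nat]]).

Definition boundedly_point_finite (beta : set (set Y)) : Prop :=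
  exists n : nat, forall f : 'I_(n.+2) -> set Y,
    injective f -> (forall i, beta (f i)) -> \bigcap_i f i = set0.

Definition sigma_boundedly_point_finite (beta : set (set Y)) : Prop :=
  exists B : nat -> set (set Y),
    beta = \bigcup_k B k /\ forall k, boundedly_point_finite (B k).

Definition UE_space : Prop :=
  kolmogorov_space Y /\
  exists alpha : set (set Y),
    sigma_boundedly_point_finite alpha /\ almost_subbase alpha.

End UEDefs.

(* Main.v *)
Require Import Defs.
From HB Require Import structures.
From mathcomp Require Import all_boot all_order all_algebra.
From mathcomp Require Import all_classical all_reals all_analysis.
From Stdlib Require List.
Import Order.TTheory GRing.Theory Num.Theory.
Import numFieldNormedType.Exports.
Local Open Scope classical_set_scope.

Lemma inP_In (T : eqType) (x : T) (s : seq T) : x \in s <-> List.In x s.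
Proof.
elim: s => [|a s IH] //=; rewrite in_cons; split.
- by case/orP => [/eqP ->|/IH]; [left|right].
- by case=> [->|/IH ->]; rewrite ?eqxx ?orbT.
Qed.

Lemma ext_list (T : Type) n : forall (S : set T),
  (forall f : 'I_n.+1 -> T, injective f -> (forall i, S (f i)) -> False) ->
  exists s : list T, (length s <= n)%N /\ (forall x, S x <-> List.In x s).
Proof.
elim: n => [|n IH] S H.
  exists nil; split => // x; split => //= Sx.
  apply: (H (fun _ => x)) => //.
  by move=> i j _; apply: val_inj; case: i => [[]] //; case: j => [[]].
have [[x Sx]|nS] := pselect (exists x, S x); last first.
  by exists nil; split => // z; split => // Sz; apply: nS; exists z.
have [|s [Hs Hin]] := IH (fun z => S z /\ z <> x).
  move=> f finj fS.
  pose g (i : 'I_n.+2) := match unlift ord0 i with Some j => f j | None => x end.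
  apply: (H g) => [i j|i]; rewrite /g.
    case: (unliftP ord0 i) => [i' ->|->]; case: (unliftP ord0 j) => [j' ->|->] //.
    - by move=> /finj ->.
    - by move=> E; case: (fS i') => _ /(_ E) [].
    - by move=> E; case: (fS j') => _ /(_ (esym E)) [].
  by case: (unliftP ord0 i) => [i' _|_] //; case: (fS i').
exists (x :: s); split => //= z; split.
  by move=> Sz; have [->|nz] := pselect (z = x); [left|right; apply/Hin].
by case=> [<-|/Hin []].
Qed.

Lemma bpf_of_lists (R : realType) (Y : topologicalType) (beta : set (set Y)) n :
  (forall y, exists s : list (set Y), (length s <= n.+1)%N /\
     (forall A, beta A -> A y -> List.In A s)) ->
  boundedly_point_finite beta.
Proof.
move=> H; exists n => f finj fb; apply/seteqP; split => // y Hy.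
have [s [Hs Hin]] := H y.
have Hg : forall i, exists j : 'I_n.+1, List.nth j s set0 = f i.
  move=> i; have /(List.In_nth _ _ set0) [j [Hj Ej]] := Hin _ (fb i) (Hy i I).
  have jn : (j < n.+1)%N by apply: leq_trans Hs; apply/ssrnat.ltP.
  by exists (Ordinal jn).
pose g i := proj1_sig (cid (Hg i)).
have ginj : injective g.
  move=> i j E; apply: finj.
  by rewrite -(proj2_sig (cid (Hg i))) -(proj2_sig (cid (Hg j))) -/(g i) -/(g j) E.
by have := leq_card _ ginj; rewrite !card_ord ltnn.
Qed.

Fixpoint tuplesOf (A : Type) (l : list A) (r : nat) : list (list A) :=
  match r with
  | 0 => nil :: nil
  | r.+1 => List.flat_map (fun a => List.map (cons a) (tuplesOf A l r)) l
  end.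
Arguments tuplesOf {A}.

Lemma tuplesOfP (A : Type) (l : list A) (w : list A) :
  (forall a, List.In a w -> List.In a l) -> List.In w (tuplesOf l (length w)).
Proof.
elim: w => [|a w IH] H /=; first by left.
apply/List.in_flat_map; exists a; split; first by apply: H; left.
by apply: List.in_map; apply: IH => b Hb; apply: H; right.
Qed.

Lemma map_eq_In (A B : Type) (f g : A -> B) (t : list A) :
  List.map f t = List.map g t -> forall a, List.In a t -> f a = g a.
Proof.
elim: t => [|b t IH] //= [E1 E2] a [<-|Ha] //; exact: IH.
Qed.
Section Coz.
Variables (R : realType) (Y : topologicalType).

Lemma cozeroT : cozero_set R (@setT Y).
Proof.
exists (fun _ => 1%R); split => //.
- exact: cst_continuous.
- by move=> y; rewrite ler01 lexx.
- by rewrite setCT; apply/seteqP; split => y //=; rewrite /preimage /= => /eqP; rewrite oner_eq0.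
Qed.

Lemma cozeroI (A B : set Y) : cozero_set R A -> cozero_set R B -> cozero_set R (A `&` B).
Proof.
move=> [f [fc fb fA]] [g [gc gb gB]].
exists (fun y => f y * g y)%R; split.
- by move=> x; apply: continuousM; [exact: fc|exact: gc].
- move=> y; have /andP[f0 f1] := fb y; have /andP[g0 g1] := gb y.
  by rewrite mulr_ge0 //= mulr_ile1.
- apply/seteqP; split => y /=.
  + rewrite /preimage /= => Hy; apply/eqP; rewrite mulf_eq0.
    have [Ay|nAy] := pselect (A y); last first.
      have : (~` A) y by [].
      by rewrite fA /preimage /= => ->; rewrite eqxx.
    have [By|nBy] := pselect (B y); first by exfalso; apply: Hy.
    have : (~` B) y by [].
    by rewrite gB /preimage /= => ->; rewrite eqxx orbT.
  + rewrite /preimage /= => /eqP; rewrite mulf_eq0 => /orP[] /eqP H [Ay By].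
    * have : (f @^-1` [set 0%R]) y by [].
      by rewrite -fA.
    * have : (g @^-1` [set 0%R]) y by [].
      by rewrite -gB.
Qed.

Lemma cozero_list (l : list (set Y)) :
  (forall A, List.In A l -> cozero_set R A) ->
  cozero_set R (fun z => forall A, List.In A l -> A z).
Proof.
elim: l => [|a l IH] H.
  have -> : (fun z : Y => forall A, List.In A nil -> A z) = setT.
    by apply/seteqP; split.
  exact: cozeroT.
have -> : (fun z : Y => forall A, List.In A (a :: l) -> A z) =
          a `&` (fun z => forall A, List.In A l -> A z).
  apply/seteqP; split => z /=.
    by move=> Hz; split => [|A HA]; apply: Hz; [left|right].
  by move=> [az Hz] A [<-|HA] //; apply: Hz.
apply: cozeroI; first by apply: H; left.
by apply: IH => A HA; apply: H; right.
Qed.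

Lemma cozeroC (Z : set Y) : zero_set R Z -> cozero_set R (~` Z).
Proof. by rewrite /cozero_set setCK. Qed.

End Coz.

Lemma length_size (T : Type) (s : seq T) : length s = size s.
Proof. by elim: s => //= a s ->. Qed.

Section Main.
Set Implicit Arguments. Unset Strict Implicit.
Variables (R : realType) (Y : topologicalType) (W : set Y)
  (alpha : set (set Y)) (B : nat -> set (set Y)) (nb : nat -> nat)
  (U : set Y -> nat -> set Y).
Hypothesis HaB : alpha = \bigcup_k B k.
Hypothesis HB : forall k (f : 'I_(nb k).+2 -> set Y),
  injective f -> (forall i, B k (f i)) -> \bigcap_i f i = set0.
Hypothesis HU : forall V, alpha V -> U_representation R V (U V).

Definition SB := alpha `|` [set ~` U V (2 * m)%N | V in alpha & m in [set: nat]].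
Hypothesis Hsub : forall (W0 : set Y) (x : Y), open W0 -> W0 x ->
     exists s : seq (set Y),
       [/\ (forall A, A \in s -> SB A),
           (forall A, A \in s -> A x)
         & (fun y => forall A, A \in s -> A y) `<=` W0].
Hypothesis oW : open W.

Definition alphaN N V := exists2 i, (i <= N)%N & B i V.

Lemma alphaN_alpha N V : alphaN N V -> alpha V.
Proof. by move=> [i _ Bi]; rewrite HaB; exists i. Qed.

Lemma alphaN_mono N N' V : (N <= N')%N -> alphaN N V -> alphaN N' V.
Proof. by move=> NN [i iN Bi]; exists i => //; apply: leq_trans NN. Qed.

Lemma U_mono V k k' : alpha V -> (k <= k')%N -> U V k `<=` U V k'.
Proof.
move=> aV /subnK <-; have [_ Hm _ _] := HU aV.
elim: (k' - k)%N => [|d IH] //= z Hz.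
by rewrite addSn; apply: Hm; apply: IH.
Qed.

Lemma U_sub V k : alpha V -> U V k `<=` V.
Proof. by move=> aV z Hz; have [-> _ _ _] := HU aV; exists k. Qed.

Lemma U_ex V x : alpha V -> V x -> exists k, U V k x.
Proof.
move=> aV; have [HV _ _ _] := HU aV.
by rewrite {1}HV => -[k _ Hk]; exists k.
Qed.

Fixpoint SN N := match N with 0 => (nb 0).+1 | N'.+1 => (SN N' + (nb N'.+1).+1)%N end.

Lemma Blist i y : exists t : list (set Y), (length t <= (nb i).+1)%N /\
  forall V, (B i V /\ V y) <-> List.In V t.
Proof.
apply: (@ext_list _ _ (fun V => B i V /\ V y)) => f finj fS.
have := @HB i f finj (fun j => (fS j).1).
move/seteqP => [+ _] => /(_ y) H; apply: H => j _; exact: (fS j).2.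
Qed.

Lemma tlist N y : exists t : list (set Y), (length t <= SN N)%N /\
  forall V, (alphaN N V /\ V y) <-> List.In V t.
Proof.
elim: N => [|N [t [Ht Hin]]].
  have [t [Ht Hin]] := Blist 0 y; exists t; split => // V; rewrite -Hin.
  split => [[[i]]|[B0 Vy]]; last by split => //; exists 0%N.
  by rewrite leqn0 => /eqP -> ? ?.
have [t' [Ht' Hin']] := Blist N.+1 y.
exists (t ++ t')%list; split.
  by rewrite List.length_app /=; apply: leq_add.
move=> V; rewrite List.in_app_iff -Hin -Hin'; split.
  move=> [[i]]; rewrite leq_eqVlt ltnS => /orP[/eqP ->|iN] Bi Vy; [right|left] => //.
  by split => //; exists i.
case=> [[[i iN Bi] Vy]|[Bi Vy]]; split => //.
  by exists i => //; apply: leqW.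
by exists N.+1.
Qed.

Lemma level_bound N x : exists M, forall V, alphaN N V -> V x -> U V M x.
Proof.
have [t [_ Hin]] := tlist N x.
suff [M HM] : exists M, forall V, List.In V t -> alphaN N V -> V x -> U V M x.
  by exists M => V aV Vx; apply: HM => //; apply/Hin.
elim: t {Hin} => [|a t [M HM]]; first by exists 0%N.
have [[aa ax]|na] := pselect (alphaN N a /\ a x).
  have [k Hk] := U_ex (alphaN_alpha aa) ax.
  exists (maxn M k) => V [<-|Vt] aV Vx.
    by apply: U_mono (alphaN_alpha aV) (leq_maxr _ _) _ Hk.
  by apply: U_mono (alphaN_alpha aV) (leq_maxl _ _) _ (HM _ Vt aV Vx).
exists M => V [<-|Vt] aV Vx; last exact: HM.
by exfalso; apply: na.
Qed.

Definition goodA N A := (alpha A -> alphaN N A) /\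
  (~ alpha A -> exists V m, alphaN N V /\ A = ~` U V (2 * m)%N).

Lemma goodA_mono N N' A : (N <= N')%N -> goodA N A -> goodA N' A.
Proof.
move=> NN [H1 H2]; split => [aA|naA]; first exact: alphaN_mono NN (H1 aA).
by have [V [m [aV ->]]] := H2 naA; exists V, m; split => //; apply: alphaN_mono aV.
Qed.

Lemma goodA_ex A : SB A -> exists N, goodA N A.
Proof.
have H1 : forall A', alpha A' -> exists i, alphaN i A'.
  by move=> A' aA; have := aA; rewrite {1}HaB => -[i _ Bi]; exists i; exists i.
case=> [aA|[V aV [m _ <-]]].
  by have [i Hi] := H1 _ aA; exists i; split.
have [j Hj] : exists j, alphaN j V.
  by have := aV; rewrite {1}HaB => -[i _ Bi]; exists i; exists i.
have [aA|naA] := pselect (alpha (~` U V (2 * m)%N)).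
  have [i Hi] := H1 _ aA; exists (maxn i j); split.
    by move=> _; apply: alphaN_mono (leq_maxl _ _) Hi.
  by move=> /(_ aA).
exists j; split => // _; exists V, m; split => //.
Qed.

Lemma goodN (s : seq (set Y)) : (forall A, A \in s -> SB A) ->
  exists N, forall A, A \in s -> goodA N A.
Proof.
elim: s => [|a s IH] Hs; first by exists 0%N.
have [N HN] := IH (fun A HA => Hs A (ltac:(by rewrite in_cons HA orbT))).
have [N' HN'] := goodA_ex (Hs a (mem_head _ _)).
exists (maxn N N') => A; rewrite in_cons => /orP[/eqP ->|HA].
  exact: goodA_mono (leq_maxr _ _) HN'.
exact: goodA_mono (leq_maxl _ _) (HN _ HA).
Qed.

Definition goodx N M x :=
  (exists s : seq (set Y), [/\ (forall A, A \in s -> SB A),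
       (forall A, A \in s -> A x),
       (fun y => forall A, A \in s -> A y) `<=` W
     & (forall A, A \in s -> goodA N A)]) /\
  (forall V, alphaN N V -> V x -> U V M x).

Lemma goodx_ex x : W x -> exists N M, goodx N M x.
Proof.
move=> Wx; have [s [H1 H2 H3]] := Hsub oW Wx.
have [N HN] := goodN H1.
have [M HM] := level_bound N x.
by exists N, M; split => //; exists s; split.
Qed.

Definition equivN N (z x : Y) := forall V, alphaN N V -> forall k, U V k z <-> U V k x.

Definition Qp N (E C : set Y) := [/\ cozero_set R C, C `<=` W, E `<=` C &
  forall x, E x -> forall V, alphaN N V -> V x -> C `<=` V].

Definition gA (A : set Y) : set Y := if `[< alpha A >] then setT else A.

Lemma Q_ex N M x : goodx N M x -> exists C, Qp N [set z | equivN N z x] C.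
Proof.
move=> [[s [Hs1 Hs2 Hs3 Hs4]] Hlev].
have [t [_ Ht]] := tlist N x.
pose L := (List.map (fun V => U V (2 * M).+1) t ++ List.map gA s)%list.
exists (fun z => forall A, List.In A L -> A z).
have HL : forall z, equivN N z x -> forall A, List.In A L -> A z.
  move=> z Hz A; rewrite List.in_app_iff => -[/List.in_map_iff [V [<- Vt]]|].
    have [aV Vx] := (Ht V).2 Vt.
    apply/(Hz V aV); apply: U_mono (alphaN_alpha aV) _ _ (Hlev V aV Vx).
    by apply: leqW; rewrite leq_pmull.
  move=> /List.in_map_iff [A0 [<- A0s]]; rewrite /gA.
  have [aA0|naA0] := pselect (alpha A0); first by rewrite asboolT.
  rewrite asboolF //.
  have [_ /(_ naA0) [V [m [aV EA0]]]] := Hs4 A0 (proj2 (inP_In _ _ _) A0s).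
  have := Hs2 A0 (proj2 (inP_In _ _ _) A0s); rewrite EA0 => Hx Hzz.
  by apply: Hx; apply/(Hz V aV).
have Hsubx : forall V, alphaN N V -> forall x', equivN N x' x -> V x' -> V x.
  move=> V aV x' Hx' Vx'; have [k Hk] := U_ex (alphaN_alpha aV) Vx'.
  by apply: (U_sub (alphaN_alpha aV)); apply/(Hx' V aV k).
split.
- apply: cozero_list => A; rewrite List.in_app_iff => -[/List.in_map_iff [V [<- Vt]]|].
    have [aV _] := (Ht V).2 Vt.
    by have [_ _ _ Hc] := HU (alphaN_alpha aV); apply: Hc.
  move=> /List.in_map_iff [A0 [<- A0s]]; rewrite /gA.
  have [aA0|naA0] := pselect (alpha A0); first by rewrite asboolT //=; apply: cozeroT.
  rewrite asboolF //.
  have [_ /(_ naA0) [V [m [aV ->]]]] := Hs4 A0 (proj2 (inP_In _ _ _) A0s).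
  by apply: cozeroC; have [_ _ Hz _] := HU (alphaN_alpha aV); apply: Hz.
- move=> z Hz; apply: Hs3 => A0 A0s.
  have [aA0|naA0] := pselect (alpha A0).
    have [/(_ aA0) aN _] := Hs4 A0 A0s.
    have Vt : List.In A0 t by apply/Ht; split => //; apply: Hs2.
    apply: (U_sub aA0 (k := (2 * M).+1)); apply: Hz; apply/List.in_app_iff; left.
    exact: (List.in_map (fun V => U V (2 * M).+1)) Vt.
  have HA : List.In (gA A0) L.
    by apply/List.in_app_iff; right; apply: List.in_map; apply/inP_In.
  by have := Hz _ HA; rewrite /gA asboolF.
- by move=> z Hz; apply: HL.
- move=> x' Hx' V aV Vx' z Hz.
  have Vt : List.In V t by apply/Ht; split => //; apply: Hsubx Hx' Vx'.
  apply: (U_sub (alphaN_alpha aV) (k := (2 * M).+1)); apply: Hz.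
  by apply/List.in_app_iff; left; exact: (List.in_map (fun V => U V (2 * M).+1)) Vt.
Qed.

Definition pick N (E : set Y) : set Y :=
  match pselect (exists C, Qp N E C) with
  | left H => proj1_sig (cid H)
  | right _ => setT
  end.

Lemma pickP N E : (exists C, Qp N E C) -> Qp N E (pick N E).
Proof. by rewrite /pick; case: pselect => // H _; exact: (proj2_sig (cid H)). Qed.

Definition classE N M (E : set Y) :=
  exists x, W x /\ goodx N M x /\ E = [set z | equivN N z x].

Definition piece N M : set (set Y) := [set C | exists E, classE N M E /\ C = pick N E].

Lemma piece_sub N M C : piece N M C -> cozero_set R C /\ C `<=` W.
Proof.
move=> [E [[x [Wx [gx ->]]] ->]].
by have [? ? _ _] := pickP (Q_ex gx).
Qed.

Definition sigv M (t : list (set Y)) (x : Y) : list (seq bool) :=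
  List.map (fun V => [seq `[< U V k x >] | k <- iota 0 M.+1]) t.

Definition hh N M t (sg : list (seq bool)) : set Y :=
  [set z | sigv M t z = sg /\ forall V, alphaN N V -> V z -> List.In V t /\ U V M z].

Lemma class_eq N M t x : (forall V, alphaN N V -> V x -> U V M x) ->
  (forall V, alphaN N V -> V x -> List.In V t) ->
  (forall V, List.In V t -> alphaN N V) ->
  [set z | equivN N z x] = hh N M t (sigv M t x).
Proof.
move=> P1 P2 P3; apply/seteqP; split => z /=.
- move=> Hz; split.
    apply: List.map_ext_in => V Vt; apply: eq_map => k.
    by apply: asbool_equiv_eq; apply: Hz; apply: P3.
  move=> V aV Vz; have [k Hk] := U_ex (alphaN_alpha aV) Vz.
  have Vx : V x by apply: (U_sub (alphaN_alpha aV)); apply/(Hz V aV k).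
  by split; [exact: P2|apply/(Hz V aV); exact: P1].
move=> [Hs Hc] V aV k.
have hsig : forall k, (k <= M)%N -> (U V k z <-> U V k x) \/ ~ List.In V t.
  move=> k' kM; have [Vt|nVt] := pselect (List.In V t); last by right.
  left; have := map_eq_In _ _ _ _ _ Hs _ Vt => /eq_in_map /(_ k').
  rewrite mem_iota add0n ltnS kM => /(_ isT) E.
  by split => H; apply/asboolP; [rewrite -E|rewrite E]; apply/asboolP.
have aV' := alphaN_alpha aV.
have [Vt|nVt] := pselect (List.In V t); last first.
  split => Hk; exfalso; apply: nVt.
    by apply: (Hc V aV (U_sub aV' Hk)).1.
  by apply: P2 aV (U_sub aV' Hk).
have hM : U V M z <-> U V M x by case: (hsig M (leqnn M)).
have [kM|Mk] := leqP k M; first by case: (hsig k kM).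
split => Hk.
  apply: (U_mono aV' (ltnW Mk)); apply/hM.
  exact: (Hc V aV (U_sub aV' Hk)).2.
apply: (U_mono aV' (ltnW Mk)); apply/hM.
exact: P1 aV (U_sub aV' Hk).
Qed.

Definition LL N M := List.flat_map (fun r => tuplesOf (tuplesOf [:: true; false] M.+1) r)
  (iota 0 (SN N).+1).

Lemma sigv_in N M t x : (length t <= SN N)%N -> List.In (sigv M t x) (LL N M).
Proof.
move=> Ht; apply/List.in_flat_map; exists (length t); split.
  by apply/inP_In; rewrite mem_iota add0n ltnS.
have -> : length t = length (sigv M t x) by rewrite List.length_map.
apply: tuplesOfP => a /List.in_map_iff [V [<- _]].
set a' := [seq _ | _ <- _].
have Ea : length a' = M.+1 by rewrite length_size size_map size_iota.
have Hb : forall b : bool, List.In b [:: true; false] by case; [left|right; left].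
have := @tuplesOfP bool [:: true; false] a' (fun b _ => Hb b).
by rewrite Ea.
Qed.

Lemma piece_bpf N M : boundedly_point_finite (piece N M).
Proof.
apply: (@bpf_of_lists R Y _ (length (LL N M))) => y.
have [t [Htl Ht]] := tlist N y.
exists (List.map (fun sg => pick N (hh N M t sg)) (LL N M)); split.
  by rewrite List.length_map leqnSn.
move=> C [E [[x [Wx [gx ->]]] ->]] Cy.
have [_ _ Ex HV] := pickP (Q_ex gx).
have Exx : [set z | equivN N z x] x by move=> V _ k.
have P2 : forall V, alphaN N V -> V x -> List.In V t.
  by move=> V aV Vx; apply/Ht; split => //; apply: (HV x Exx V aV Vx y Cy).
rewrite (class_eq gx.2 P2 (fun V Vt => ((Ht V).2 Vt).1)).
apply: (List.in_map (fun sg => pick N (hh N M t sg))).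
exact: sigv_in.
Qed.

Definition piece' k : set (set Y) :=
  match (unpickle k : option (nat * nat)) with
  | Some p => piece p.1 p.2
  | None => set0
  end.

Lemma main_sec : exists beta : set (set Y),
      [/\ sigma_boundedly_point_finite beta,
          (forall A, beta A -> cozero_set R A)
        & W = \bigcup_(A in beta) A].
Proof.
exists (\bigcup_k piece' k); split.
- exists piece'; split => // k; rewrite /piece'; case: unpickle => [[N M]|].
    exact: piece_bpf.
  by exists 0%N => f _ /(_ ord0).
- move=> A [k _]; rewrite /piece'; case: unpickle => [[N M]|] //.
  by move/piece_sub => [].
- apply/seteqP; split => [w Ww|w [A [k _ Hk] Aw]].
    have [N [M gw]] := goodx_ex Ww.
    exists (pick N [set z | equivN N z w]).
      exists (pickle (N, M)) => //; rewrite /piece' pickleK /=.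
      by exists [set z | equivN N z w]; split => //; exists w.
    have [_ _ Ex _] := pickP (Q_ex gw).
    by apply: Ex => V _ k.
  move: Hk; rewrite /piece'; case: unpickle => [[N M]|] // /piece_sub [_].
  by apply.
Qed.

End Main.

Theorem proposition5p10 (R : realType) (Y : topologicalType) :
  UE_space R Y ->
  forall W : set Y, open W ->
    exists beta : set (set Y),
      [/\ sigma_boundedly_point_finite beta,
          (forall A, beta A -> cozero_set R A)
        & W = \bigcup_(A in beta) A].
Proof.
move=> [_ [alpha [[B [HaB HBb]] [U [HU [_ Hsub]]]]]] W oW.
pose nb k := proj1_sig (cid (HBb k)).
have HB : forall k (f : 'I_(nb k).+2 -> set Y),
    injective f -> (forall i, B k (f i)) -> \bigcap_i f i = set0.
  by move=> k; exact: (proj2_sig (cid (HBb k))).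
exact: (@main_sec R Y W alpha B nb U HaB HB HU Hsub oW).
Qed.
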